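(* Let $L_1$ and $L_2$ be ladders in the triangular lattice with $n_1$ and $n_2$ vertices respectively, where $n_1>n_2>1$. Then $$2^{n_1-n_2}\,\tau(L_2)\ \le\ \tau(L_1)\ \le\ 3^{n_1-n_2}\,\tau(L_2).$$
   Context: The triangular lattice is the infinite planar graph whose vertices are the points $a(1,0)+b(1/2,\sqrt3/2)$, $a,b\in\mathbb Z$, with edges between points at distance 1. A ladder is the induced subgraph of the triangular lattice on the vertices of two consecutive segments lying on two adjacent parallel lattice lines, such that each endpoint of one segment is adjacent to an endpoint of the other segment. Equivalently, a ladder with $s$ vertices is isomorphic to the graph on $v_1,\dots,v_s$ with edges $v_iv_{i+1}$ and $v_iv_{i+2}$ (the square of a path). $\tau(H)$ denotes the number of spanning trees of $H$. *)

(* Defs.v *)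
From mathcomp Require Import all_boot.
Set Implicit Arguments. Unset Strict Implicit. Unset Printing Implicit Defensive.

(* A finite simple graph on a finType V is given by an adjacency relation
   (assumed symmetric and irreflexive by the graphs we use).  Edges are
   2-element subsets {x, y} of V with adj x y. *)
Definition edges (V : finType) (adj : rel V) : {set {set V}} :=
  [set [set x; y] | x in V, y in V & adj x y].

Definition sub_adj (V : finType) (T : {set {set V}}) : rel V :=
  fun x y => (x != y) && ([set x; y] \in T).

Definition connected_edges (V : finType) (T : {set {set V}}) : bool :=
  [forall x, forall y, connect (sub_adj T) x y].

(* (V, T) is a tree: connected and minimally connected (every edge is
   needed, i.e. removing any edge disconnects the graph), equivalently
   connected and acyclic. *)
Definition is_tree (V : finType) (T : {set {set V}}) : bool :=
  connected_edges T && [forall e in T, ~~ connected_edges (T :\ e)].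

Definition is_spanning_tree (V : finType) (adj : rel V) (T : {set {set V}}) : bool :=
  (T \subset edges adj) && is_tree T.

Definition tau (V : finType) (adj : rel V) : nat :=
  #|[set T : {set {set V}} | is_spanning_tree adj T]|.

(* The ladder with s vertices: the square of the path v_0 ... v_{s-1},
   i.e. v_i v_j adjacent iff |i - j| is 1 or 2. *)
Definition ladder_adj (s : nat) : rel 'I_s :=
  fun i j => [|| i.+1 == j :> nat, j.+1 == i :> nat,
                 i.+2 == j :> nat | j.+2 == i :> nat].
Arguments ladder_adj s : clear implicits.

(* Main.v *)
Require Import Defs.
From mathcomp Require Import all_boot zify.
Set Implicit Arguments. Unset Strict Implicit. Unset Printing Implicit Defensive.

Lemma connect_map (A B : finType) (f : A -> B) (e1 : rel A) (e2 : rel B) :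
  (forall x y, e1 x y -> connect e2 (f x) (f y)) ->
  forall x y, connect e1 x y -> connect e2 (f x) (f y).
Proof.
move=> H x y /connectP [p pth ->]; elim: p x pth => [|z p IH] x /=.
  by rewrite connect0.
by case/andP => exz pz; apply: connect_trans (H _ _ exz) (IH _ pz).
Qed.

Lemma connect_noout (A : finType) (e : rel A) x y :
  (forall z, ~~ e x z) -> connect e x y -> x = y.
Proof.
move=> H /connectP [[|z p] /= pth ->] //.
by case/andP: pth => exz; rewrite (negbTE (H z)) in exz.
Qed.

Lemma set2C (V : finType) (x y : V) : [set x; y] = [set y; x].
Proof. by rewrite setUC. Qed.

Lemma sub_adj_sym (V : finType) (T : {set {set V}}) : symmetric (sub_adj T).
Proof. by move=> x y; rewrite /sub_adj eq_sym set2C. Qed.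

Lemma connected_root (V : finType) (T : {set {set V}}) r :
  (forall x, connect (sub_adj T) x r) -> connected_edges T.
Proof.
move=> H; apply/forallP => x; apply/forallP => y.
apply: connect_trans (H x) _.
by rewrite (sym_connect_sym (@sub_adj_sym V T)).
Qed.

Lemma set2_eq (V : finType) (x y x' y' : V) :
  [set x; y] = [set x'; y'] -> (x = x' /\ y = y') \/ (x = y' /\ y = x').
Proof.
move=> E.
have hx : x \in [set x'; y'] by rewrite -E !inE eqxx.
have hy : y \in [set x'; y'] by rewrite -E !inE eqxx orbT.
have hx' : x' \in [set x; y] by rewrite E !inE eqxx.
have hy' : y' \in [set x; y] by rewrite E !inE eqxx orbT.
move: hx hy hx' hy'; rewrite !inE.
by do 4 (case/orP => /eqP ?); subst; auto.
Qed.

Lemma sub_adj_edges (V : finType) (adj : rel V) (T : {set {set V}}) x y :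
  symmetric adj -> T \subset edges adj -> sub_adj T x y -> adj x y.
Proof.
move=> sy sT /andP [_ /(subsetP sT)] /imset2P [x' y' _].
rewrite inE => a /set2_eq [[-> ->]|[-> ->]] //; by rewrite sy.
Qed.

Lemma edges_mem (V : finType) (adj : rel V) (T : {set {set V}}) E :
  irreflexive adj -> T \subset edges adj -> E \in T ->
  exists x y, E = [set x; y] /\ sub_adj T x y.
Proof.
move=> ir sT ET; case/imset2P: (subsetP sT _ ET) => x y _; rewrite inE => a Ed.
exists x, y; split => //; rewrite /sub_adj -Ed ET andbT.
by apply: contraTneq a => ->; rewrite ir.
Qed.

Lemma sub_adj_ext (V : finType) (adj : rel V) (T1 T2 : {set {set V}}) :
  irreflexive adj -> T1 \subset edges adj -> T2 \subset edges adj ->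
  (forall x y, sub_adj T1 x y = sub_adj T2 x y) -> T1 = T2.
Proof.
move=> ir s1 s2 H; apply/setP => E; apply/idP/idP => hE.
  by have [x [y [-> h]]] := edges_mem ir s1 hE; move: h; rewrite H => /andP[].
by have [x [y [-> h]]] := edges_mem ir s2 hE; move: h; rewrite -H => /andP[].
Qed.

Lemma sub_adjD (V : finType) (T : {set {set V}}) e x y :
  sub_adj (T :\ e) x y = sub_adj T x y && ([set x; y] != e).
Proof. by rewrite /sub_adj !inE; case: (x != y); case: (_ != e); case: (_ \in T). Qed.

Lemma sub_adjU (V : finType) (T S : {set {set V}}) x y :
  sub_adj (T :|: S) x y = sub_adj T x y || sub_adj S x y.
Proof. by rewrite /sub_adj inE andb_orr. Qed.

Lemma sub_adj1 (V : finType) (E : {set V}) x y :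
  sub_adj [set E] x y = (x != y) && ([set x; y] == E).
Proof. by rewrite /sub_adj inE. Qed.

Lemma ladder_sym s : symmetric (ladder_adj s).
Proof. by move=> x y; rewrite /ladder_adj; case: (_ == _); case: (_ == _); case: (_ == _); case: (_ == _); rewrite ?orbT ?orbF. Qed.

Lemma ladder_irr s : irreflexive (ladder_adj s).
Proof. by move=> x; rewrite /ladder_adj !(gtn_eqF (ltnSn _)) gtn_eqF //. Qed.
Definition w m : 'I_m.+2 -> 'I_m.+3 := lift ord_max.
Definition vv m : 'I_m.+3 := ord_max.
Definition aa m : 'I_m.+2 := ord_max.
Definition bb m : 'I_m.+2 := Ordinal (leqnSn m.+1).
Definition pj m (c : 'I_m.+2) (u : 'I_m.+3) : 'I_m.+2 := odflt c (unlift ord_max u).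
Definition ET m (T : {set {set 'I_m.+2}}) : {set {set 'I_m.+3}} := [set (@w m) @: e | e : {set 'I_m.+2} in T].
Definition RT m (T : {set {set 'I_m.+3}}) : {set {set 'I_m.+2}} := [set e : {set 'I_m.+2} | (@w m) @: e \in T].
Arguments vv {m}. Arguments aa {m}. Arguments bb {m}. Arguments w {m}.

Lemma w_inj m : injective (@w m).
Proof. exact: lift_inj. Qed.

Lemma w_set2 m (x y : 'I_m.+2) : w @: [set x; y] = [set w x; w y].
Proof. by rewrite imsetU1 imset_set1. Qed.

Lemma vw m (x : 'I_m.+2) : (vv == w x) = false.
Proof. exact/negbTE/neq_lift. Qed.

Lemma wv m (x : 'I_m.+2) : (w x == vv) = false.
Proof. by rewrite eq_sym vw. Qed.

Lemma vv_notin2 m (x y : 'I_m.+2) : vv \notin [set w x; w y].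
Proof. by rewrite !inE !vw. Qed.

Lemma set2_vw m (x y : 'I_m.+2) z : ([set w x; w y] == [set vv; z]) = false.
Proof.
apply/negbTE; apply: contraNneq (vv_notin2 x y) => ->; by rewrite !inE eqxx.
Qed.

Lemma set2_vw' m (x y : 'I_m.+2) z : ([set vv; z] == [set w x; w y]) = false.
Proof. by rewrite eq_sym set2_vw. Qed.

Lemma v_notin_ET m (T : {set {set 'I_m.+2}}) E : E \in ET T -> vv \notin E.
Proof. by case/imsetP => e _ ->; apply/imsetP => [[x _]]; move/eqP; rewrite vw. Qed.

Lemma sub_adj_ET_w m (T : {set {set 'I_m.+2}}) x y :
  sub_adj (ET T) (w x) (w y) = sub_adj T x y.
Proof.
rewrite /sub_adj (inj_eq (@w_inj m)) -w_set2 /ET mem_imset //.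
exact: imset_inj (@w_inj m).
Qed.

Lemma sub_adj_ET_v m (T : {set {set 'I_m.+2}}) z : sub_adj (ET T) vv z = false.
Proof.
apply/negbTE/negP => /andP [_ /v_notin_ET]; by rewrite !inE eqxx.
Qed.

Lemma sub_adj_ET_v' m (T : {set {set 'I_m.+2}}) z : sub_adj (ET T) z vv = false.
Proof. by rewrite sub_adj_sym sub_adj_ET_v. Qed.

Lemma sub_adj_RT m (T : {set {set 'I_m.+3}}) x y :
  sub_adj (RT T) x y = sub_adj T (w x) (w y).
Proof. by rewrite /sub_adj /RT inE w_set2 (inj_eq (@w_inj m)). Qed.

Variant dec_spec m (u : 'I_m.+3) : Type :=
 | DecV of u = vv | DecW x of u = w x.

Lemma decP m (u : 'I_m.+3) : dec_spec u.
Proof. by case: (unliftP ord_max u) => [j ->|->]; [apply: (DecW (x:=j)) | apply: DecV]. Qed.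

Lemma pj_w m c (x : 'I_m.+2) : pj c (w x) = x.
Proof. by rewrite /pj /w liftK. Qed.

Lemma pj_v m (c : 'I_m.+2) : pj c vv = c.
Proof. by rewrite /pj /vv unlift_none. Qed.

Lemma ladder_w m (x y : 'I_m.+2) : ladder_adj m.+3 (w x) (w y) = ladder_adj m.+2 x y.
Proof. by rewrite /ladder_adj /w !lift_max. Qed.

Lemma ladder_v m (z : 'I_m.+2) : ladder_adj m.+3 vv (w z) = (z == aa) || (z == bb).
Proof.
rewrite /ladder_adj /w lift_max /vv /aa /bb /=.
rewrite -!(inj_eq val_inj) /=.
have := ltn_ord z; move: (nat_of_ord z) => k hk.
case: (ltngtP k m.+1) => [h|h|->]; last by rewrite !eqxx ?orbT.
  case: (ltngtP k m) => [h'|h'|->]; last by rewrite !eqxx ?orbT.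
    by apply/negbTE/negP => /or4P [] /eqP; lia.
  lia.
lia.
Qed.

Lemma mem_edges (V : finType) (adj : rel V) x y : adj x y -> [set x; y] \in edges adj.
Proof. by move=> a; apply/imset2P; exists x y; rewrite ?inE. Qed.

Lemma aa_bb m : (@aa m == bb) = false.
Proof. by rewrite -(inj_eq val_inj) /= gtn_eqF. Qed.

Definition NE m (c : 'I_m.+2) : {set 'I_m.+3} := [set vv; w c].
Definition LT m (T : {set {set 'I_m.+2}}) c := ET T :|: [set NE c].

Lemma set2_vv m (u z : 'I_m.+3) : vv != u -> ([set vv; u] == [set vv; z]) = (u == z).
Proof.
move=> hu; apply/eqP/eqP => [/set2_eq [[_ ->]|[-> ->]] //| -> //].

Qed.

Lemma sub_adj_LT_w m (T : {set {set 'I_m.+2}}) c x y :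
  sub_adj (LT T c) (w x) (w y) = sub_adj T x y.
Proof. by rewrite /LT sub_adjU sub_adj_ET_w sub_adj1 /NE set2_vw andbF orbF. Qed.

Lemma sub_adj_LT_v m (T : {set {set 'I_m.+2}}) c u :
  sub_adj (LT T c) vv u = (u == w c).
Proof.
rewrite /LT sub_adjU sub_adj_ET_v sub_adj1 /NE /=.
case: (decP u) => [->|x ->]; first by rewrite eqxx /= vw.
by rewrite vw /= set2_vv ?vw.
Qed.

Lemma lower_tree m (T : {set {set 'I_m.+2}}) c :
  (c == aa) || (c == bb) -> is_spanning_tree (ladder_adj _) T ->
  is_spanning_tree (ladder_adj _) (LT T c).
Proof.
move=> hc /andP [sT /andP [cT bT]].
apply/andP; split.
  apply/subsetP => E; rewrite /LT inE => /orP [/imsetP [e eT ->] | ].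
    have [x [y [-> sxy]]] := edges_mem (@ladder_irr _) sT eT.
    rewrite w_set2; apply: mem_edges; rewrite ladder_w.
    exact: sub_adj_edges (@ladder_sym _) sT sxy.
  by rewrite inE => /eqP ->; apply: mem_edges; rewrite ladder_v.
apply/andP; split.
  apply: (connected_root (r := w c)) => u; case: (decP u) => [->|x ->].
    by apply: connect1; rewrite sub_adj_LT_v.
  have := forallP (forallP cT x) c.
  apply: connect_map => x' y' h; apply: connect1; by rewrite sub_adj_LT_w.
apply/forallP => E; apply/implyP => hE; apply/negP => con.
move: hE con; rewrite /LT inE => /orP [/imsetP [e eT ->] con | ]; last first.
  rewrite inE => /eqP -> con.
  suff: vv = w c by move/eqP; rewrite vw.
  apply: (connect_noout _ (forallP (forallP con vv) (w c))) => z.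
  rewrite sub_adjD -/(LT T c) sub_adj_LT_v.
  case: (z =P w c) => [->|] //=; by rewrite /NE eqxx.
have := forallP bT e; rewrite eT /= => /negP; apply.
apply/forallP => x; apply/forallP => y.
have := forallP (forallP con (w x)) (w y); rewrite -{2}(pj_w c x) -{2}(pj_w c y).
apply: connect_map => u u'; rewrite sub_adjD -/(LT T c).
case: (decP u) => [->|x' ->].
  by rewrite sub_adj_LT_v => /andP [/eqP -> _]; rewrite pj_v pj_w connect0.
case: (decP u') => [->|y' ->].
  by rewrite sub_adj_sym sub_adj_LT_v => /andP [/eqP -> _]; rewrite pj_v pj_w connect0.
rewrite sub_adj_LT_w !pj_w -w_set2 (inj_eq (imset_inj (@w_inj m))) => h.
by apply: connect1; rewrite sub_adjD.
Qed.

Definition STs n := [set T : {set {set 'I_n}} | is_spanning_tree (ladder_adj n) T].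

Lemma tauE n : tau (ladder_adj n) = #|STs n|.
Proof. by []. Qed.

Lemma lower_count m : 2 * tau (ladder_adj m.+2) <= tau (ladder_adj m.+3).
Proof.
rewrite !tauE.
pose G (p : {set {set 'I_m.+2}} * bool) := LT p.1 (if p.2 then aa else bb).
have -> : 2 * #|STs m.+2| = #|G @: setX (STs m.+2) [set: bool]|.
  rewrite card_in_imset ?cardsX ?cardsT ?card_bool 1?mulnC //.
  move=> [T1 b1] [T2 b2] /setXP [h1 _] /setXP [h2 _] H; rewrite /STs inE in h1; rewrite inE in h2.
  have eT : T1 = T2.
    have s1 : T1 \subset edges (ladder_adj _) by move: h1 => /andP [].
    have s2 : T2 \subset edges (ladder_adj _) by move: h2 => /andP [].
    apply: (sub_adj_ext (@ladder_irr _) s1 s2) => x y.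
    by rewrite -(sub_adj_LT_w T1 (if b1 then aa else bb)) /G /= in H *; rewrite H sub_adj_LT_w.
  subst T2; congr pair.
  move: H => /(congr1 (fun T => sub_adj T vv (w aa))); rewrite /G /= !sub_adj_LT_v !(inj_eq (@w_inj _)).
  by case: b1; case: b2; rewrite ?eqxx ?aa_bb.
apply: subset_leq_card; apply/subsetP => T /imsetP [[T' b]] /setXP [hT _] ->.
rewrite /STs inE in hT; rewrite inE.
by apply: lower_tree hT; case: b => /=; rewrite eqxx ?orbT.
Qed.

Lemma vv_notin_imset m (E : {set 'I_m.+2}) : vv \notin w @: E.
Proof. by apply/imsetP => [[x _]]; move/eqP; rewrite vw. Qed.

Lemma set2v_neq m (E : {set 'I_m.+2}) z : ([set vv; z] != w @: E).
Proof. by apply: contraNneq (vv_notin_imset E) => <-; rewrite !inE eqxx. Qed.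

Lemma set2w_neq m (E : {set 'I_m.+2}) x y : ([set w x; w y] != w @: E) = ([set x; y] != E).
Proof. by rewrite -w_set2 (inj_eq (imset_inj (@w_inj m))). Qed.

Lemma RT_mem m (T : {set {set 'I_m.+3}}) E :
  T \subset edges (ladder_adj _) -> E \in RT T ->
  exists x y, E = [set x; y] /\ sub_adj T (w x) (w y).
Proof.
move=> sT; rewrite inE => hE.
have [u [u' [eE su]]] := edges_mem (@ladder_irr _) sT hE.
have hu : u \in w @: E by rewrite eE !inE eqxx.
have hu' : u' \in w @: E by rewrite eE !inE eqxx orbT.
case: (decP u) eE hu su => [->|x ->]; first by rewrite (negbTE (vv_notin_imset E)).
case: (decP u') hu' => [->|y ->]; first by rewrite (negbTE (vv_notin_imset E)).
move=> _ eE' _ sxy; exists x, y; split => //.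
by apply: (imset_inj (@w_inj m)); rewrite w_set2 eE'.
Qed.

Lemma RT_sub m (T : {set {set 'I_m.+3}}) :
  T \subset edges (ladder_adj _) -> RT T \subset edges (ladder_adj _).
Proof.
move=> sT; apply/subsetP => E hE; have [x [y [-> sxy]]] := RT_mem sT hE.
by apply: mem_edges; rewrite -ladder_w; apply: sub_adj_edges (@ladder_sym _) sT sxy.
Qed.

Lemma v_nbr m (T : {set {set 'I_m.+3}}) u :
  T \subset edges (ladder_adj _) -> sub_adj T vv u -> u = w aa \/ u = w bb.
Proof.
move=> sT /(sub_adj_edges (@ladder_sym _) sT).
case: (decP u) => [->|x ->]; first by rewrite ladder_irr.
by rewrite ladder_v => /orP [] /eqP ->; auto.
Qed.

Lemma v_has_nbr m (T : {set {set 'I_m.+3}}) :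
  connected_edges T -> exists u, sub_adj T vv u.
Proof.
move=> cT; have /connectP [[|u p] /= pth eq] := forallP (forallP cT vv) (w aa).
  by move/eqP: eq; rewrite wv.
by case/andP: pth => h _; exists u.
Qed.

Lemma upper_tree1 m (T : {set {set 'I_m.+3}}) c :
  is_spanning_tree (ladder_adj _) T -> sub_adj T vv (w c) ->
  (forall u, sub_adj T vv u -> u = w c) ->
  is_spanning_tree (ladder_adj _) (RT T).
Proof.
move=> /andP [sT /andP [cT bT]] hc H.
apply/andP; split; first exact: RT_sub.
apply/andP; split.
  apply: (@connected_root _ (RT T) c) => x.
  suff: connect (sub_adj (RT T)) (pj c (w x)) (pj c (w c)) by rewrite !pj_w.
  apply: (connect_map _ (forallP (forallP cT (w x)) (w c))) => u u'.
  case: (decP u) => [->|x' ->]; first by move/H => ->; rewrite pj_v pj_w connect0.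
  case: (decP u') => [->|y' ->].
    by rewrite sub_adj_sym => /H ->; rewrite pj_v pj_w connect0.
  by rewrite !pj_w -sub_adj_RT => h; apply: connect1.
apply/forallP => E; apply/implyP => hE; apply/negP => con.
have := forallP bT (w @: E); rewrite (_ : w @: E \in T) /=; last by move: hE; rewrite inE.
move/negP; apply; apply: (connected_root (r := w c)) => u.
case: (decP u) => [->|x ->].
  by apply: connect1; rewrite sub_adjD hc set2v_neq.
have := forallP (forallP con x) c; apply: connect_map => x' y'.
by rewrite sub_adjD sub_adj_RT -set2w_neq => h; apply: connect1; rewrite sub_adjD.
Qed.

Definition E0 m : {set 'I_m.+2} := [set bb; aa].

Lemma triangle m (T : {set {set 'I_m.+3}}) :
  is_spanning_tree (ladder_adj _) T -> sub_adj T vv (w aa) -> sub_adj T vv (w bb) ->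
  E0 m \notin RT T.
Proof.
move=> /andP [sT /andP [cT bT]] hA hB; apply/negP; rewrite inE /E0 w_set2 => hE.
have := forallP bT [set w bb; w aa]; rewrite hE /= => /negP; apply.
apply/forallP => x; apply/forallP => y.
have := forallP (forallP cT x) y; apply: connect_map => u u' h.
case: (eqVneq [set u; u'] [set w bb; w aa]) => [/set2_eq [[-> ->]|[-> ->]] | ne].
- apply: (@connect_trans _ _ vv); apply: connect1; rewrite sub_adjD.
    by rewrite sub_adj_sym hB /= set2C set2_vw'.
  by rewrite hA /= set2_vw'.
- apply: (@connect_trans _ _ vv); apply: connect1; rewrite sub_adjD.
    by rewrite sub_adj_sym hA /= set2C set2_vw'.
  by rewrite hB /= set2_vw'.
- by apply: connect1; rewrite sub_adjD h ne.
Qed.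

Lemma sub_adj_E0 m (T : {set {set 'I_m.+3}}) x y :
  sub_adj (E0 m |: RT T) x y = sub_adj T (w x) (w y) || ((x != y) && ([set x; y] == E0 m)).
Proof. by rewrite sub_adjU sub_adj1 sub_adj_RT orbC. Qed.

Lemma E0_cases m (x y : 'I_m.+2) : [set x; y] == E0 m -> (x = bb /\ y = aa) \/ (x = aa /\ y = bb).
Proof. by move/eqP/set2_eq. Qed.

Lemma upper_tree2 m (T : {set {set 'I_m.+3}}) :
  is_spanning_tree (ladder_adj _) T -> sub_adj T vv (w aa) -> sub_adj T vv (w bb) ->
  is_spanning_tree (ladder_adj _) (E0 m |: RT T).
Proof.
move=> tT hA hB; have nE := triangle tT hA hB.
move: tT => /andP [sT /andP [cT bT]].
apply/andP; split.
  apply/subsetP => E; rewrite in_setU1 => /orP [/eqP ->|hE].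
    by apply: mem_edges; rewrite /ladder_adj /= eqxx.
  exact: (subsetP (RT_sub sT)).
apply/andP; split.
  apply: (@connected_root _ _ aa) => x.
  suff: connect (sub_adj (E0 m |: RT T)) (pj aa (w x)) (pj aa (w aa)) by rewrite !pj_w.
  apply: (connect_map _ (forallP (forallP cT (w x)) (w aa))) => u u'.
  have lab : connect (sub_adj (E0 m |: RT T)) aa bb.
    by apply: connect1; rewrite sub_adj_E0 aa_bb /= set2C eqxx orbT.
  have lba : connect (sub_adj (E0 m |: RT T)) bb aa.
    by apply: connect1; rewrite sub_adj_E0 eq_sym aa_bb /= eqxx orbT.
  case: (decP u) => [->|x' ->].
    by move/(v_nbr sT) => [] ->; rewrite pj_v pj_w ?connect0.
  case: (decP u') => [->|y' ->].
    by rewrite sub_adj_sym => /(v_nbr sT) [] ->; rewrite pj_v pj_w ?connect0.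
  by rewrite !pj_w => h; apply: connect1; rewrite sub_adj_E0 h.
apply/forallP => E; apply/implyP; rewrite in_setU1 => hE; apply/negP => con.
case: (eqVneq E (E0 m)) => [eE|neE].
  subst E; move: con; rewrite setU1K // => con.
  have := forallP bT [set vv; w aa]; rewrite (_ : [set vv; w aa] \in T); last by case/andP: hA.
  move/negP; apply; apply: (@connected_root _ _ (w bb)) => u.
  case: (decP u) => [->|x ->].
    by apply: connect1; rewrite sub_adjD hB /= set2_vv ?vw // (inj_eq (@w_inj _)) eq_sym aa_bb.
  have := forallP (forallP con x) bb; apply: connect_map => x' y'.
  by rewrite sub_adj_RT => h; apply: connect1; rewrite sub_adjD h set2_vw.
have hE' : E \in RT T by move: hE; rewrite (negbTE neE).
have := forallP bT (w @: E); rewrite (_ : w @: E \in T) /=; last by move: hE'; rewrite inE.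
move/negP; apply; apply: (@connected_root _ _ (w aa)) => u.
case: (decP u) => [->|x ->].
  by apply: connect1; rewrite sub_adjD hA set2v_neq.
have := forallP (forallP con x) aa; apply: connect_map => x' y'.
rewrite sub_adjD sub_adj_E0 => /andP [/orP [h|/andP [_ /E0_cases [[-> ->]|[-> ->]]]] hne].
  by apply: connect1; rewrite sub_adjD h set2w_neq.
- apply: (@connect_trans _ _ vv); apply: connect1; rewrite sub_adjD.
    by rewrite sub_adj_sym hB /= set2C set2v_neq.
  by rewrite hA /= set2v_neq.
- apply: (@connect_trans _ _ vv); apply: connect1; rewrite sub_adjD.
    by rewrite sub_adj_sym hA /= set2C set2v_neq.
  by rewrite hB /= set2v_neq.
Qed.

Lemma vdeg m (T : {set {set 'I_m.+3}}) z : T \subset edges (ladder_adj _) ->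
  sub_adj T vv (w z) = ((z == aa) && sub_adj T vv (w aa)) || ((z == bb) && sub_adj T vv (w bb)).
Proof.
move=> sT; case: (eqVneq z aa) => [->|na] /=; first by rewrite aa_bb orbF.
case: (eqVneq z bb) => [->|nb] //=.
apply/negP => /(v_nbr sT) [] /w_inj eq; [by rewrite eq eqxx in na | by rewrite eq eqxx in nb].
Qed.

Definition FF m (T : {set {set 'I_m.+3}}) : {set {set 'I_m.+2}} * option bool :=
  let A := sub_adj T vv (w aa) in let B := sub_adj T vv (w bb) in
  (if A && B then E0 m |: RT T else RT T, if A && B then None else Some A).

Lemma AorB m (T : {set {set 'I_m.+3}}) : is_spanning_tree (ladder_adj _) T ->
  sub_adj T vv (w aa) || sub_adj T vv (w bb).
Proof.
move=> /andP [sT /andP [cT _]]; have [u hu] := v_has_nbr cT.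
by case: (v_nbr sT hu) => eu; rewrite eu in hu; rewrite hu ?orbT.
Qed.

Lemma upper_count m : tau (ladder_adj m.+3) <= 3 * tau (ladder_adj m.+2).
Proof.
rewrite !tauE.
have -> : #|STs m.+3| = #|(@FF m) @: STs m.+3|.
  rewrite card_in_imset //.
  move=> T1 T2 h1 h2; rewrite /STs inE in h1; rewrite inE in h2.
  have s1 : T1 \subset edges (ladder_adj _) by move: h1 => /andP [].
  have s2 : T2 \subset edges (ladder_adj _) by move: h2 => /andP [].
  have o1 := AorB h1; have o2 := AorB h2.
  have t1 := @triangle _ _ h1; have t2 := @triangle _ _ h2.
  rewrite /FF /=.
  move: o1 o2 t1 t2.
  case A1: (sub_adj T1 vv (w aa)); case B1: (sub_adj T1 vv (w bb));
  case A2: (sub_adj T2 vv (w aa)); case B2: (sub_adj T2 vv (w bb)) => //= _ _ t1 t2 [eR];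
  (have eR' : RT T1 = RT T2 by
     first [ rewrite -(setU1K (t1 isT isT)) -(setU1K (t2 isT isT)) eR | exact: eR ]);
  apply: (sub_adj_ext (@ladder_irr _) s1 s2) => x y;
  (case: (decP x) => [->|x' ->]; case: (decP y) => [->|y' ->];
   [ by rewrite /sub_adj eqxx
   | by rewrite (vdeg _ s1) (vdeg _ s2) A1 A2 B1 B2
   | by rewrite sub_adj_sym (sub_adj_sym T2) (vdeg _ s1) (vdeg _ s2) A1 A2 B1 B2
   | by rewrite -!sub_adj_RT eR' ]).
have c3 : #|[set: option bool]| = 3 by rewrite cardsT card_option card_bool.
rewrite mulnC -c3.
rewrite -cardsX; apply: subset_leq_card; apply/subsetP => _ /imsetP [T hT ->].
rewrite /STs inE in hT; apply/setXP; split; last by rewrite inE.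
rewrite inE /FF /=.
have o := AorB hT; have sT : T \subset edges (ladder_adj _) by move: hT => /andP [].
case A: (sub_adj T vv (w aa)); case B: (sub_adj T vv (w bb)) => /=.
- exact: upper_tree2.
- apply: (upper_tree1 hT A) => u h; case: (v_nbr sT h) => eu //; by rewrite eu B in h.
- apply: (upper_tree1 hT B) => u h; case: (v_nbr sT h) => eu //; by rewrite eu A in h.
- by rewrite A B in o.
Qed.

Lemma step_bounds n : 1 < n ->
  2 * tau (ladder_adj n) <= tau (ladder_adj n.+1) /\ tau (ladder_adj n.+1) <= 3 * tau (ladder_adj n).
Proof. by case: n => [|[|m]] // _; split; [apply: lower_count | apply: upper_count]. Qed.

Theorem mainTheorem10 (n1 n2 : nat) (h2 : 1 < n2) (h12 : n2 < n1) :
  2 ^ (n1 - n2) * tau (ladder_adj n2) <= tau (ladder_adj n1)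
  /\ tau (ladder_adj n1) <= 3 ^ (n1 - n2) * tau (ladder_adj n2).
Proof.
rewrite -(subnK (ltnW h12)); move: (n1 - n2) => k; rewrite addnK.
elim: k => [|k [IH1 IH2]]; first by rewrite !mul1n add0n.
have [s1 s2] := step_bounds (ltn_addl k h2).
rewrite addSn !expnS -!mulnA; split.
  by apply: leq_trans s1; rewrite leq_mul2l.
by apply: leq_trans s2 _; rewrite leq_mul2l.
Qed.
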